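(* Let $\Psi_h$ be a composition method on the extended phase space $\mathbb{R}^{4d}$ as described in the context, with coefficients $a_1,\dots,a_s$, and consider the extended phase space integrator with symmetric projection based on $\Psi_h$. Then this integrator is an extended Runge--Kutta method and can be written as a monoimplicit symplectic Runge--Kutta method: there exist Runge--Kutta coefficients $(a_{ij})$, $(b_i)$ (depending only on $a_1,\dots,a_s$) such that the matrix $(a_{ij})$ is a rank-one matrix plus a matrix of spectral radius zero, $b_ib_j-b_ia_{ij}-b_ja_{ji}=0$ for all $i,j$, and for every Hamiltonian $H$ the symmetric projection integrator $z_0\mapsto z_1$ coincides with one step of this Runge--Kutta method applied to $\dot q=D_2H(q,p)$, $\dot p=-D_1H(q,p)$.
   Context: Let $H\colon\mathbb{R}^{2d}\to\mathbb{R}$ be smooth. On $\mathbb{R}^{4d}\ni(q,x,p,y)$ let $\hat H_A(q,x,p,y)=H(x,p)$, $\hat H_B(q,x,p,y)=H(q,y)$, with symplectic form $dq\wedge dp+dx\wedge dy$. Their flows are $\exp(tX_{\hat H_A})(q,x,p,y)=(q+tD_2H(x,p),x,p,y-tD_1H(x,p))$ and $\exp(tX_{\hat H_B})(q,x,p,y)=(q,x+tD_2H(q,y),p-tD_1H(q,y),y)$. A composition method with real coefficients $a_1,\dots,a_s$ is $\Psi_h=\phi_s\circ\cdots\circ\phi_1$ where $\phi_i=\exp(a_ihX_{\hat H_A})$ for $i$ odd and $\phi_i=\exp(a_ihX_{\hat H_B})$ for $i$ even. Let $D=\begin{bmatrix}I_d&-I_d&0&0\\0&0&I_d&-I_d\end{bmatrix}$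 and $\mathcal{N}=\ker D=\{(q,q,p,p)\}$. The extended phase space integrator with symmetric projection maps $z_0=(q_0,p_0)$ to $z_1$ as follows: $\zeta_0=(q_0,q_0,p_0,p_0)$; find $\mu\in\mathbb{R}^{2d}$ with $\Psi_h(\zeta_0+D^\top\mu)+D^\top\mu\in\mathcal{N}$; set $(q_1,q_1,p_1,p_1):=\Psi_h(\zeta_0+D^\top\mu)+D^\top\mu$ and $z_1=(q_1,p_1)$. An extended Runge--Kutta method (parameters $a_{ij}$, $1\le i\le s$, $1\le j\le m$; $b_i$; full-rank $(m-s)\times m$ matrix $d_{ij}$) for $\dot z=f(z)$ is defined by $Z_i=z_0+h\sum_{j=1}^m a_{ij}k_j$, $k_i=f(Z_i)$ ($i\le s$), $0=\sum_j d_{ij}k_j$ ($i=1,\dots,m-s$), $z_1=z_0+h\sum_{i=1}^m b_ik_i$. A Runge--Kutta method $Z_i=z_0+h\sum_ja_{ij}f(Z_j)$, $z_1=z_0+h\sum_ib_if(Z_i)$ is called monoimplicit if its matrix $(a_{ij})$ is a rank-one matrix plus a matrix of zero spectral radius; the condition $b_ib_j-b_ia_{ij}-b_ja_{ji}=0$ for all $i,j$ is the symplecticity condition for Runge--Kutta methods. *)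

(* Defs.v *)
From HB Require Import structures.
From mathcomp Require Import all_boot all_order all_algebra.
From mathcomp Require Import all_classical all_reals all_analysis.
From mathcomp Require Import complex.
Set Implicit Arguments. Unset Strict Implicit. Unset Printing Implicit Defensive.
Import Order.TTheory GRing.Theory Num.Theory.
Import numFieldNormedType.Exports.
Local Open Scope ring_scope.

Section Defs.
Variable R : realType.

Definition phase d := ('rV[R]_d * 'rV[R]_d)%type.

Definition D1 d (H : phase d -> R) (q p : 'rV[R]_d) : 'rV[R]_d :=
  \row_i ('D_((delta_mx 0 i : 'rV[R]_d), (0 : 'rV[R]_d)) H (q, p)).
Definition D2 d (H : phase d -> R) (q p : 'rV[R]_d) : 'rV[R]_d :=
  \row_i ('D_((0 : 'rV[R]_d), (delta_mx 0 i : 'rV[R]_d)) H (q, p)).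

Record ext d := Ext { eq_ : 'rV[R]_d; ex_ : 'rV[R]_d; ep_ : 'rV[R]_d; ey_ : 'rV[R]_d }.

Definition flowA d (H : phase d -> R) (t : R) (z : ext d) : ext d :=
  let: Ext q x p y := z in
  Ext (q + t *: D2 H x p) x p (y - t *: D1 H x p).
Definition flowB d (H : phase d -> R) (t : R) (z : ext d) : ext d :=
  let: Ext q x p y := z in
  Ext q (x + t *: D2 H q y) (p - t *: D1 H q y) y.

(** Composition method Psi_h = phi_s o ... o phi_1 with coefficients
    a = [:: a_1; ...; a_s]; phi_i = exp(a_i h X_{H_A}) for i odd,
    exp(a_i h X_{H_B}) for i even.  [odd_i] tells whether the head of the
    list has odd index. *)
Fixpoint compose_aux d (H : phase d -> R) (h : R) (odd_i : bool) (a : seq R)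
    (z : ext d) : ext d :=
  match a with
  | [::] => z
  | c :: a' => compose_aux H h (~~ odd_i) a'
                 ((if odd_i then flowA H else flowB H) (c * h) z)
  end.
Definition Psi d (H : phase d -> R) (a : seq R) (h : R) (z : ext d) : ext d :=
  compose_aux H h true a z.

(** zeta + D^T mu, for mu = (mu1, mu2):  D^T mu = (mu1, -mu1, mu2, -mu2). *)
Definition addDT d (z : ext d) (mu1 mu2 : 'rV[R]_d) : ext d :=
  let: Ext q x p y := z in Ext (q + mu1) (x - mu1) (p + mu2) (y - mu2).

Definition inN d (z : ext d) : Prop := eq_ z = ex_ z /\ ep_ z = ey_ z.

Definition sym_proj_step d (H : phase d -> R) (a : seq R) (h : R)
    (z0 z1 : phase d) : Prop :=
  exists mu1 mu2 : 'rV[R]_d,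
    let w := addDT (Psi H a h (addDT (Ext z0.1 z0.1 z0.2 z0.2) mu1 mu2)) mu1 mu2 in
    inN w /\ z1 = (eq_ w, ep_ w).

Definition hamvf d (H : phase d -> R) (z : phase d) : phase d :=
  (D2 H z.1 z.2, - D1 H z.1 z.2).

(** One step of the Runge--Kutta method (A, b) for z' = f(z):
    Z_i = z0 + h sum_j a_ij f(Z_j),  z1 = z0 + h sum_i b_i f(Z_i),
    written componentwise on the pair z = (q,p). *)
Definition rk_step m d (A : 'M[R]_m) (b : 'rV[R]_m) (f : phase d -> phase d)
    (h : R) (z0 z1 : phase d) : Prop :=
  exists Z : 'I_m -> phase d,
    (forall i, Z i = (z0.1 + h *: \sum_j A i j *: (f (Z j)).1,
                      z0.2 + h *: \sum_j A i j *: (f (Z j)).2)) /\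
    z1 = (z0.1 + h *: \sum_i b 0 i *: (f (Z i)).1,
          z0.2 + h *: \sum_i b 0 i *: (f (Z i)).2).

Definition spectral_radius_zero m (N : 'M[R]_m) : Prop :=
  forall lambda : R[i], eigenvalue (map_mx (fun x : R => (x%:C)%C) N) lambda ->
    `|lambda| = 0.

Definition monoimplicit m (A : 'M[R]_m) : Prop :=
  exists U N : 'M[R]_m, A = U + N /\ \rank U = 1%N /\ spectral_radius_zero N.

Definition rk_symplectic m (A : 'M[R]_m) (b : 'rV[R]_m) : Prop :=
  forall i j, b 0 i * b 0 j - b 0 i * A i j - b 0 j * A j i = 0.

End Defs.

(* Main.v *)
Require Import Defs.
From HB Require Import structures.
From mathcomp Require Import all_boot all_order all_algebra.
From mathcomp Require Import all_classical all_reals all_analysis.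
From mathcomp Require Import complex.
From mathcomp Require Import ring lra.
Set Implicit Arguments. Unset Strict Implicit. Unset Printing Implicit Defensive.
Import Order.TTheory GRing.Theory Num.Theory.
Import numFieldNormedType.Exports.
Local Open Scope ring_scope.

Lemma strict_trig_srz (R : realType) m (N : 'M[R]_m) :
  (forall i j : 'I_m, (i <= j)%N -> N i j = 0) -> spectral_radius_zero N.
Proof.
move=> HN lam.
set M := map_mx _ N.
have HM : forall i j : 'I_m, (i <= j)%N -> M i j = 0.
  by move=> i j lt; rewrite /M mxE HN.
rewrite eigenvalue_root_char.
have Ht : is_trig_mx M.
  apply/is_trig_mxP => i j lt.
  exact: (HM i j (ltnW lt)).
rewrite (char_poly_trig Ht).
rewrite (eq_bigr (fun _ => 'X)); last by move=> i _; rewrite HM // subr0.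
rewrite prodr_const rootE hornerXn.
rewrite expf_eq0 => /andP[_ /eqP ->].
by rewrite normr0.
Qed.


Lemma compose_rcons (R : realType) d (H : phase R d -> R) h b l c z :
  compose_aux H h b (rcons l c) z =
  (if addb b (odd (size l)) then flowA H else flowB H) (c * h) (compose_aux H h b l z).
Proof.
elim: l b z => [|x l IH] b z /=; first by rewrite addbF.
by rewrite IH addbN -addNb.
Qed.
Definition traj (R : realType) d (H : phase R d -> R) (a : seq R) h z k :=
  compose_aux H h true (take k a) z.

Definition Wp (R : realType) d (H : phase R d -> R) (a : seq R) h z k : phase R d :=
  let t := traj H a h z k in if odd k then (eq_ t, ey_ t) else (ex_ t, ep_ t).

Definition Sev (R : realType) d (a : seq R) k (u : nat -> 'rV[R]_d) :=
  \sum_(0 <= j < k) (if odd j then 0 else a`_j) *: u j.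
Definition Sod (R : realType) d (a : seq R) k (u : nat -> 'rV[R]_d) :=
  \sum_(0 <= j < k) (if odd j then a`_j else 0) *: u j.

Lemma traj_formula (R : realType) d (H : phase R d -> R) (a : seq R) h q x p y k :
  (k <= size a)%N ->
  let u1 := fun j => (hamvf H (Wp H a h (Ext q x p y) j)).1 in
  let u2 := fun j => (hamvf H (Wp H a h (Ext q x p y) j)).2 in
  traj H a h (Ext q x p y) k =
  Ext (q + h *: Sev a k u1) (x + h *: Sod a k u1) (p + h *: Sod a k u2) (y + h *: Sev a k u2).
Proof.
move=> + u1 u2.
elim: k => [|k IH] Hk.
  by rewrite /traj /Sev /Sod take0 /= !big_geq // !scaler0 !addr0.
have Hs : traj H a h (Ext q x p y) k.+1 =
   (if ~~ odd k then flowA H else flowB H) (a`_k * h) (traj H a h (Ext q x p y) k).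
  rewrite /traj (take_nth 0 Hk) compose_rcons size_take.
  by rewrite (_ : (k < size a)%N) //.
rewrite Hs.
have Hu1 : u1 k = (hamvf H (Wp H a h (Ext q x p y) k)).1 by [].
have Hu2 : u2 k = (hamvf H (Wp H a h (Ext q x p y) k)).2 by [].
rewrite /Sev /Sod !big_nat_recr //=.
move: Hu1 Hu2; rewrite /Wp; rewrite IH; last exact: ltnW.
case: (odd k) => /= -> ->; rewrite /hamvf /= !scale0r !addr0 !scalerDr !addrA.
all: congr Ext.
all: by rewrite scalerA (mulrC h) ?scalerN.
Qed.


Definition sg (R : realType) (j : nat) : R := if odd j then 1 else -1.

Definition Acoef (R : realType) (a : seq R) (k j : nat) : R :=
  sg R k / 4 * (sg R j * a`_j) + (if (j < k)%N && (odd j != odd k) then a`_j else 0).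

Definition Amat (R : realType) (a : seq R) : 'M[R]_(size a) :=
  \matrix_(k, j) Acoef a k j.
Definition bvec (R : realType) (a : seq R) : 'rV[R]_(size a) :=
  \row_j (a`_j / 2).

Definition Sall (R : realType) d (a : seq R) (u : nat -> 'rV[R]_d) :=
  \sum_(0 <= j < size a) (sg R j * a`_j) *: u j.

Lemma Sall_eq (R : realType) d (a : seq R) (u : nat -> 'rV[R]_d) :
  Sall a u = Sod a (size a) u - Sev a (size a) u.
Proof.
rewrite /Sall /Sod /Sev -sumrB; apply: eq_bigr => j _.
by rewrite /sg; case: (odd j); rewrite ?scale0r ?subr0 ?sub0r ?mul1r -?scaleNr ?mulN1r.
Qed.

Lemma sum_ord_nat (R : realType) d n k (g : nat -> 'rV[R]_d) : (k <= n)%N ->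
  \sum_(j < n) (if (j < k)%N then g j else 0) = \sum_(0 <= j < k) g j.
Proof.
move=> kn; by rewrite big_mkord (big_ord_widen n g kn) [in RHS]big_mkcond.
Qed.

Lemma Amat_sum (R : realType) d (a : seq R) (k : 'I_(size a)) (u : nat -> 'rV[R]_d) :
  \sum_(j < size a) Amat a k j *: u j =
  (sg R k / 4) *: Sall a u + (if odd k then Sev a k u else Sod a k u).
Proof.
rewrite (eq_bigr (fun j : 'I_(size a) => (sg R k / 4) *: ((sg R j * a`_j) *: u j) +
   (if (j < k)%N then (if odd k then (if odd j then 0 else a`_j) else (if odd j then a`_j else 0)) *: u j else 0))); last first.
  move=> j _; rewrite mxE /Acoef scalerDl scalerA; congr (_ + _).
  by case: (j < k)%N; case: (odd j); case: (odd k); rewrite /= ?scale0r.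
rewrite big_split /= -scaler_sumr /Sall big_mkord; congr (_ + _).
rewrite (sum_ord_nat (fun j => (if odd k then (if odd j then 0 else a`_j) else (if odd j then a`_j else 0)) *: u j) (ltnW (ltn_ord k))).
by case: (odd k).
Qed.

Lemma bvec_sum (R : realType) d (a : seq R) (u : nat -> 'rV[R]_d) :
  \sum_(j < size a) bvec a 0 j *: u j = 2^-1 *: (Sev a (size a) u + Sod a (size a) u).
Proof.
rewrite /Sev /Sod -big_split /= scaler_sumr big_mkord; apply: eq_bigr => j _.
rewrite mxE -scalerDl scalerA; congr (_ *: _).
by case: (odd j); rewrite ?addr0 ?add0r mulrC.
Qed.

Lemma Amat_sympl (R : realType) (a : seq R) : rk_symplectic (Amat a) (bvec a).
Proof.
move=> i j; rewrite !mxE /Acoef /sg.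
case: (ltngtP i j) => [lt|lt|/val_inj ->].
- rewrite /=.
  case: (odd i); case: (odd j) => /=; lra.
- rewrite /=.
  by case: (odd i); case: (odd j) => /=; lra.
- rewrite ?ltnn /=.
  by case: (odd j) => /=; lra.
Qed.


Lemma fwd (R : realType) (a : seq R) d (H : phase R d -> R) h (z0 z1 : phase R d) :
  sym_proj_step H a h z0 z1 -> rk_step (Amat a) (bvec a) (hamvf H) h z0 z1.
Proof.
case: z0 => q0 p0.
move=> [mu1 [mu2 /=]].
set ini := Ext (q0 + mu1) (q0 - mu1) (p0 + mu2) (p0 - mu2).
have HT := @traj_formula R d H a h (q0 + mu1) (q0 - mu1) (p0 + mu2) (p0 - mu2).
rewrite -/ini in HT.
set u1 := fun j => (hamvf H (Wp H a h ini j)).1 in HT.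
set u2 := fun j => (hamvf H (Wp H a h ini j)).2 in HT.
have HP : Psi H a h ini = traj H a h ini (size a) by rewrite /traj take_size.
rewrite HP (HT _ (leqnn _)) /=.
move=> [[/= E1 E2] Hz].
have Hm1 : mu1 = (h / 4) *: Sall a u1.
  apply/rowP => c; move/rowP/(_ c): E1; rewrite Sall_eq !mxE => E1; lra.
have Hm2 : mu2 = (- (h / 4)) *: Sall a u2.
  apply/rowP => c; move/rowP/(_ c): E2; rewrite Sall_eq !mxE => E2; lra.
exists (fun i : 'I_(size a) => Wp H a h ini i); split.
- move=> k.
  rewrite (@Amat_sum R d a k u1) (@Amat_sum R d a k u2).
  rewrite {1}/Wp (HT k (ltnW (ltn_ord k))) /= /sg.
  case: (odd k) => /=; congr pair; apply/rowP => c; rewrite ?Hm1 ?Hm2 !mxE; ring.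
- rewrite Hz (@bvec_sum R d a u1) (@bvec_sum R d a u2).
  congr pair; apply/rowP => c; rewrite ?Hm1 ?Hm2 !Sall_eq !mxE; lra.
Qed.


Lemma bwd (R : realType) (a : seq R) d (H : phase R d -> R) h (z0 z1 : phase R d) :
  rk_step (Amat a) (bvec a) (hamvf H) h z0 z1 -> sym_proj_step H a h z0 z1.
Proof.
case: z0 => q0 p0 /=.
move=> [Z [HZ Hz1]].
pose Zn := fun j : nat => match @insub _ (fun j => (j < size a)%N) 'I_(size a) j with
  Some o => Z o | None => (0, 0) end.
have ZnK : forall o : 'I_(size a), Zn o = Z o by move=> o; rewrite /Zn valK.
pose v1 := fun j => (hamvf H (Zn j)).1.
pose v2 := fun j => (hamvf H (Zn j)).2.
pose mu1 := (h / 4) *: Sall a v1.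
pose mu2 := (- (h / 4)) *: Sall a v2.
exists mu1, mu2 => /=.
set ini := Ext (q0 + mu1) (q0 - mu1) (p0 + mu2) (p0 - mu2).
have HT := @traj_formula R d H a h (q0 + mu1) (q0 - mu1) (p0 + mu2) (p0 - mu2).
rewrite -/ini in HT.
set u1 := fun j => (hamvf H (Wp H a h ini j)).1 in HT.
set u2 := fun j => (hamvf H (Wp H a h ini j)).2 in HT.
have HP : Psi H a h ini = traj H a h ini (size a) by rewrite /traj take_size.
have HW : forall k, (k < size a)%N -> Wp H a h ini k = Zn k.
  elim/ltn_ind => k IH ks.
  have Eu : forall j, (0 <= j < k)%N -> u1 j = v1 j /\ u2 j = v2 j.
    move=> j /andP[_ jk]; rewrite /u1 /u2 /v1 /v2 IH //.
    exact: ltn_trans jk ks.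
  have E1 : Sev a k u1 = Sev a k v1 by apply: eq_big_nat => j /Eu [-> _].
  have E2 : Sev a k u2 = Sev a k v2 by apply: eq_big_nat => j /Eu [_ ->].
  have E3 : Sod a k u1 = Sod a k v1 by apply: eq_big_nat => j /Eu [-> _].
  have E4 : Sod a k u2 = Sod a k v2 by apply: eq_big_nat => j /Eu [_ ->].
  have := HZ (Ordinal ks).
  rewrite -(ZnK (Ordinal ks)) /=.
  rewrite (eq_bigr (fun j : 'I_(size a) => Amat a (Ordinal ks) j *: v1 j)); last first.
    by move=> j _; rewrite /v1 ZnK.
  rewrite [X in (_, _ + _ *: X)](eq_bigr (fun j : 'I_(size a) => Amat a (Ordinal ks) j *: v2 j)); last first.
    by move=> j _; rewrite /v2 ZnK.
  rewrite (@Amat_sum R d a (Ordinal ks) v1) (@Amat_sum R d a (Ordinal ks) v2) /= => ->.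
  rewrite {1}/Wp (HT k (ltnW ks)) /= E1 E2 E3 E4 /sg.
  case: (odd k) => /=; congr pair; apply/rowP => c; rewrite !mxE; ring.
have Eu : forall j, (0 <= j < size a)%N -> u1 j = v1 j /\ u2 j = v2 j.
  by move=> j /andP[_ jk]; rewrite /u1 /u2 /v1 /v2 HW.
have E1 : Sev a (size a) u1 = Sev a (size a) v1 by apply: eq_big_nat => j /Eu [-> _].
have E2 : Sev a (size a) u2 = Sev a (size a) v2 by apply: eq_big_nat => j /Eu [_ ->].
have E3 : Sod a (size a) u1 = Sod a (size a) v1 by apply: eq_big_nat => j /Eu [-> _].
have E4 : Sod a (size a) u2 = Sod a (size a) v2 by apply: eq_big_nat => j /Eu [_ ->].
rewrite HP (HT _ (leqnn _)) /= E1 E2 E3 E4.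
move: Hz1.
rewrite (eq_bigr (fun j : 'I_(size a) => bvec a 0 j *: v1 j)); last first.
  by move=> j _; rewrite /v1 ZnK.
rewrite [X in (_, _ + _ *: X)](eq_bigr (fun j : 'I_(size a) => bvec a 0 j *: v2 j)); last first.
  by move=> j _; rewrite /v2 ZnK.
rewrite (@bvec_sum R d a v1) (@bvec_sum R d a v2) => ->.
split; [split|]; rewrite /=; try congr pair; apply/rowP => c;
  rewrite /mu1 /mu2 !Sall_eq !mxE; lra.
Qed.


Lemma mono_nz (R : realType) (a : seq R) : has (fun c => c != 0) a -> monoimplicit (Amat a).
Proof.
move=> Hnz.
pose U := \matrix_(k < size a, j < size a) (sg R k / 4 * (sg R j * a`_j)).
pose N := \matrix_(k < size a, j < size a) (if (j < k)%N && (odd j != odd k) then a`_j else 0).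
exists U, N; split; [|split].
- by apply/matrixP => i j; rewrite !mxE /Acoef.
- pose cu : 'cV[R]_(size a) := \col_k (sg R k / 4).
  pose rv : 'rV[R]_(size a) := \row_j (sg R j * a`_j).
  have HU : U = cu *m rv by apply/matrixP => i j; rewrite !mxE big_ord1 !mxE.
  have le1 : (\rank U <= 1)%N.
    rewrite HU; exact: leq_trans (mxrankM_maxl cu rv) (rank_leq_col cu).
  have ne0 : \rank U != 0%N.
    rewrite mxrank_eq0; move/hasP: Hnz => [c cin cnz].
    have jlt : (index c a < size a)%N by rewrite index_mem.
    pose o := Ordinal jlt.
    apply/eqP => /matrixP/(_ o o); rewrite !mxE /= nth_index // /sg.
    move=> E; apply: (negP cnz); apply/eqP.
    by move: E; case: (odd (index c a)) => /= E; lra.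
  by apply/eqP; rewrite eqn_leq le1 lt0n ne0.
- apply: strict_trig_srz => i j ij; rewrite mxE.
  by rewrite ltnNge ij.
Qed.

Lemma rk_zero (R : realType) (a : seq R) d (H : phase R d -> R) h (z0 z1 : phase R d) :
  ~~ has (fun c => c != 0) a ->
  rk_step (Amat a) (bvec a) (hamvf H) h z0 z1 <-> z1 = z0.
Proof.
move=> Hnz.
have a0 : forall j, a`_j = 0.
  move=> j; case: (ltnP j (size a)) => jlt; last by rewrite nth_default.
  move/hasPn: Hnz => Hz; have := Hz _ (mem_nth 0 jlt).
  by rewrite negbK => /eqP.
have A0 : forall i j, Amat a i j = 0.
  by move=> i j; rewrite mxE /Acoef !a0 !mulr0 add0r; case: ifP.
have b0 : forall j, bvec a 0 j = 0 by move=> j; rewrite mxE a0 mul0r.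
split.
- move=> [Z [_ ->]].
  rewrite !big1 ?scaler0 ?addr0; first by case: z0.
  + by move=> i _; rewrite b0 scale0r.
  + by move=> i _; rewrite b0 scale0r.
- move=> ->; exists (fun _ => z0); split.
  + move=> i; rewrite !big1 ?scaler0 ?addr0; first by case: z0.
    * by move=> j _; rewrite A0 scale0r.
    * by move=> j _; rewrite A0 scale0r.
  + rewrite !big1 ?scaler0 ?addr0; first by case: z0.
    * by move=> j _; rewrite b0 scale0r.
    * by move=> j _; rewrite b0 scale0r.
Qed.

Lemma rk_two (R : realType) d (H : phase R d -> R) h (z0 z1 : phase R d) :
  rk_step (delta_mx 0 1 : 'M[R]_2) 0 (hamvf H) h z0 z1 <-> z1 = z0.
Proof.
split.
- move=> [Z [_ ->]].
  rewrite !big1 ?scaler0 ?addr0; first by case: z0.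
  + by move=> i _; rewrite mxE scale0r.
  + by move=> i _; rewrite mxE scale0r.
- move=> ->.
  exists (fun i : 'I_2 => if i == 0 then (z0.1 + h *: (hamvf H z0).1, z0.2 + h *: (hamvf H z0).2) else z0).
  split.
  + move=> i; rewrite !big_ord_recl !big_ord0 !mxE /=.
    case: i => [[|[|i]]] Hi //=.
    * by rewrite !scale0r !scale1r !add0r !addr0.
    * by rewrite !scale0r !add0r !scaler0 !addr0; case: z0.
  + rewrite !big1 ?scaler0 ?addr0; first by case: z0.
    * by move=> i _; rewrite mxE scale0r.
    * by move=> i _; rewrite mxE scale0r.
Qed.

Theorem proposition4 (R : realType) (a : seq R) :
  exists (m : nat) (A : 'M[R]_m) (b : 'rV[R]_m),
    monoimplicit A /\ rk_symplectic A b /\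
    forall (d : nat) (H : phase R d -> R),
      (forall z : phase R d, differentiable H z) ->
      forall (h : R) (z0 z1 : phase R d),
        sym_proj_step H a h z0 z1 <-> rk_step A b (hamvf H) h z0 z1.
Proof.
case: (boolP (has (fun c => c != 0) a)) => Hnz.
- exists (size a), (Amat a), (bvec a); split; first exact: mono_nz.
  split; first exact: Amat_sympl.
  move=> d H _ h z0 z1; split; [exact: fwd | exact: bwd].
- exists 2%N, (delta_mx 0 1), 0; split.
    exists (delta_mx 0 1), 0; split; first by rewrite addr0.
    split; first exact: mxrank_delta.
    by apply: strict_trig_srz => i j _; rewrite mxE.
  split; first by move=> i j; rewrite !mxE; ring.
  move=> d H _ h z0 z1; rewrite rk_two -(rk_zero H h z0 z1 Hnz).
  split; [exact: fwd | exact: bwd].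
Qed.
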